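(* Let $\Gamma$ be a marginal vector with strictly positive entries and fix an edge $ij\in\mathcal E$. The Bregman projections (with respect to $\Phi$) of $\Gamma$ onto the four affine sets below are given as follows, where in each case all components of $\Gamma$ not mentioned are unchanged. (a) If $\Gamma'=\mathcal P_{\mathcal X_{ij\to i}}(\Gamma)$, then for all $x_i,x_j\in\chi$: $\Gamma'_{ij}(x_i,x_j)=\Gamma_{ij}(x_i,x_j)\sqrt{\Gamma_i(x_i)/\sum_x\Gamma_{ij}(x_i,x)}$ and $\Gamma'_i(x_i)=\Gamma_i(x_i)\sqrt{\sum_x\Gamma_{ij}(x_i,x)/\Gamma_i(x_i)}$. (b) If $\Gamma'=\mathcal P_{\mathcal X_{ij,i}}(\Gamma)$, then $\Gamma'_i=\Gamma_i/\sum_x\Gamma_i(x)$ and $\Gamma'_{ij}=\Gamma_{ij}/\sum_{x_i,x_j}\Gamma_{ij}(x_i,x_j)$. (c) If $\Gamma'=\mathcal P_{\mathcal X_{ij\to j}}(\Gamma)$, then for all $x_i,x_j\in\chi$: $\Gamma'_{ij}(x_i,x_j)=\Gamma_{ij}(x_i,x_j)\sqrt{\Gamma_j(x_j)/\sum_x\Gamma_{ij}(x,x_j)}$ and $\Gamma'_j(x_j)=\Gamma_j(x_j)\sqrt{\sum_x\Gamma_{ij}(x,x_j)/\Gamma_j(x_j)}$. (d) If $\Gamma'=\mathcal P_{\mathcal X_{ij,j}}(\Gamma)$, then $\Gamma'_j=\Gamma_j/\sum_x\Gamma_j(x)$ and $\Gamma'_{ij}=\Gamma_{ij}/\sum_{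x_i,x_j}\Gamma_{ij}(x_i,x_j)$.
   Context: Let $G=(\mathcal V,\mathcal E)$ be a graph with $\mathcal V=\{1,\dots,n\}$, each edge written as an ordered pair $ij$, and $\chi=\{0,\dots,d-1\}$. A marginal vector $\Gamma$ consists of vectors $\Gamma_i\in\mathbb R^d$ ($i\in\mathcal V$, indexed $\Gamma_i(x)$) and matrices $\Gamma_{ij}\in\mathbb R^{d\times d}$ ($ij\in\mathcal E$, indexed $\Gamma_{ij}(x_i,x_j)$). Let $\Phi(\Gamma)=\sum\Gamma(\log\Gamma-1)$ summed over all entries, with Bregman divergence $\mathcal D_\Phi(P,Q)=\Phi(P)-\Phi(Q)-\langle\nabla\Phi(Q),P-Q\rangle$, and for a set $\mathcal X$ the Bregman projection $\mathcal P_{\mathcal X}(Q)=\arg\min_{P\in\mathcal X}\mathcal D_\Phi(P,Q)$. With $\mathbb 1$ the all-ones vector, define $\mathcal X_{ij\to i}=\{\Gamma:\Gamma_{ij}\mathbb 1=\Gamma_i\}$, $\mathcal X_{ij,i}=\{\Gamma:\Gamma_i^\top\mathbb 1=1,\ \mathbb 1^\top\Gamma_{ij}\mathbb 1=1\}$, $\mathcal X_{ij\to j}=\{\Gamma:\Gamma_{ij}^\top\mathbb 1=\Gamma_j\}$, $\mathcal X_{ij,j}=\{\Gamma:\Gamma_j^\top\mathbb 1=1,\ \mathbb 1^\top\Gamma_{ij}\mathbb 1=1\}$. *)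

(* Defs.v *)
From HB Require Import structures.
From mathcomp Require Import all_boot all_order all_algebra.
From mathcomp Require Import all_classical all_reals.
From mathcomp Require Import exp.
Set Implicit Arguments. Unset Strict Implicit. Unset Printing Implicit Defensive.
Import Order.TTheory GRing.Theory Num.Theory.
Local Open Scope ring_scope.

(* Graph: vertices 'I_n, edges indexed by 'I_m, edge e is the ordered pair
   (src e, dst e). Labels chi = 'I_d. *)

(* A marginal vector: node vectors Gamma_i (i : 'I_n) and edge matrices
   Gamma_e (e : 'I_m), indexed Gamma_e(x_i, x_j). *)
Record marg (R : realType) (n m d : nat) := Marg {
  mnode : 'I_n -> 'I_d -> R;
  medge : 'I_m -> 'I_d -> 'I_d -> R }.

Section Defs.
Variables (R : realType) (n m d : nat).
Local Notation M := (marg R n m d).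

Definition sum_entries2 (f : R -> R -> R) (P Q : M) : R :=
  \sum_(i < n) \sum_(x < d) f (mnode P i x) (mnode Q i x)
  + \sum_(e < m) \sum_(x < d) \sum_(y < d) f (medge P e x y) (medge Q e x y).

Definition Phi (P : M) : R := sum_entries2 (fun p _ => p * (ln p - 1)) P P.

(* <grad Phi(Q), P - Q>, grad Phi(Q) = log Q entrywise *)
Definition gradPhi_inner (Q P : M) : R :=
  sum_entries2 (fun p q => ln q * (p - q)) P Q.

Definition Bregman (P Q : M) : R := Phi P - Phi Q - gradPhi_inner Q P.

(* domain of Phi: nonnegative entries (with 0 log 0 = 0) *)
Definition nonneg_marg (P : M) : Prop :=
  (forall i x, 0 <= mnode P i x) /\ (forall e x y, 0 <= medge P e x y).

Definition pos_marg (P : M) : Prop :=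
  (forall i x, 0 < mnode P i x) /\ (forall e x y, 0 < medge P e x y).

Definition is_bregman_proj (X : M -> Prop) (Q P : M) : Prop :=
  nonneg_marg P /\ X P /\
  forall P', nonneg_marg P' -> X P' -> Bregman P Q <= Bregman P' Q.

Variables (src dst : 'I_m -> 'I_n).

Definition rowsum (G : M) e (xi : 'I_d) := \sum_(x < d) medge G e xi x.
Definition colsum (G : M) e (xj : 'I_d) := \sum_(x < d) medge G e x xj.
Definition nodesum (G : M) i := \sum_(x < d) mnode G i x.
Definition edgesum (G : M) e := \sum_(x < d) \sum_(y < d) medge G e x y.

Definition X_to_i e (G : M) : Prop := forall xi, rowsum G e xi = mnode G (src e) xi.
Definition X_norm_i e (G : M) : Prop := nodesum G (src e) = 1 /\ edgesum G e = 1.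
Definition X_to_j e (G : M) : Prop := forall xj, colsum G e xj = mnode G (dst e) xj.
Definition X_norm_j e (G : M) : Prop := nodesum G (dst e) = 1 /\ edgesum G e = 1.

End Defs.

(* Main.v *)
Require Import Defs.
From HB Require Import structures.
From mathcomp Require Import all_boot all_order all_algebra.
From mathcomp Require Import all_classical all_reals.
From mathcomp Require Import sequences exp.
From mathcomp Require Import ring lra.
Import Order.TTheory GRing.Theory Num.Theory.
Local Open Scope ring_scope.

Section Aux.
Variables (R : realType) (n m d : nat).
Local Notation M := (marg R n m d).

Definition sumE (Fn : 'I_n -> 'I_d -> R) (Fe : 'I_m -> 'I_d -> 'I_d -> R) : R :=
  \sum_(i < n) \sum_(x < d) Fn i x + \sum_(e < m) \sum_(x < d) \sum_(y < d) Fe e x y.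

Lemma sumEB Fn Fe Gn Ge : sumE Fn Fe - sumE Gn Ge =
  sumE (fun i x => Fn i x - Gn i x) (fun e x y => Fe e x y - Ge e x y).
Proof.
rewrite /sumE opprD addrACA; congr (_ + _); rewrite -sumrB;
  apply: eq_bigr => i _; rewrite -sumrB //; apply: eq_bigr => x _; rewrite -sumrB //.
Qed.

Lemma sumE_ge0 Fn Fe : (forall i x, 0 <= Fn i x) -> (forall e x y, 0 <= Fe e x y) ->
  0 <= sumE Fn Fe.
Proof.
move=> h1 h2; rewrite /sumE addr_ge0 //; do ! (apply: sumr_ge0 => ? _) => //.
Qed.

Lemma sumE_eq0 Fn Fe : (forall i x, 0 <= Fn i x) -> (forall e x y, 0 <= Fe e x y) ->
  sumE Fn Fe = 0 -> (forall i x, Fn i x = 0) /\ (forall e x y, Fe e x y = 0).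
Proof.
move=> h1 h2 /eqP; rewrite /sumE paddr_eq0; first last.
- by do ! (apply: sumr_ge0 => ? _).
- by do ! (apply: sumr_ge0 => ? _).
move=> /andP[/eqP H1 /eqP H2]; split.
- move=> i x.
  have H := psumr_eq0P (fun i _ => sumr_ge0 _ (fun x _ => h1 i x)) H1 (i:=i) isT.
  exact: (psumr_eq0P (fun x _ => h1 i x) H (i:=x) isT).
- move=> e x y.
  have H := psumr_eq0P (fun e _ => sumr_ge0 _ (fun x _ => sumr_ge0 _ (fun y _ => h2 e x y))) H2 (i:=e) isT.
  have H' := psumr_eq0P (fun x _ => sumr_ge0 _ (fun y _ => h2 e x y)) H (i:=x) isT.
  exact: (psumr_eq0P (fun y _ => h2 e x y) H' (i:=y) isT).
Qed.

Lemma sumE_single (k0 : 'I_n) (f0 : 'I_m) Fn Fe :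
  (forall k x, k != k0 -> Fn k x = 0) -> (forall f x y, f != f0 -> Fe f x y = 0) ->
  sumE Fn Fe = \sum_(x < d) Fn k0 x + \sum_(x < d) \sum_(y < d) Fe f0 x y.
Proof.
move=> h1 h2; rewrite /sumE (bigD1 k0) //= (bigD1 f0) //=.
have E1 : \sum_(i < n | i != k0) \sum_(x < d) Fn i x = 0.
  by apply: big1 => i hi; apply: big1 => x _; apply: h1.
have E2 : \sum_(i < m | i != f0) \sum_(x < d) \sum_(y < d) Fe i x y = 0.
  by apply: big1 => i hi; apply: big1 => x _; apply: big1 => y _; apply: h2.
by rewrite E1 E2 !addr0.
Qed.

Definition bb (p q : R) := p * (ln p - 1) - q * (ln q - 1) - ln q * (p - q).

Lemma Bregman_sumE (P Q : M) : Bregman P Q =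
  sumE (fun i x => bb (mnode P i x) (mnode Q i x))
       (fun e x y => bb (medge P e x y) (medge Q e x y)).
Proof. by rewrite /Bregman /Phi /gradPhi_inner /sum_entries2 -/(sumE _ _) !sumEB. Qed.

Lemma bb_ge0 p s : 0 <= p -> 0 < s -> 0 <= bb p s /\ (bb p s = 0 -> p = s).
Proof.
move=> p0 s0; rewrite /bb.
have [->|pp] := eqVneq p 0.
  rewrite mul0r sub0r mulrBr; split; first by lra.
  by move=> h; lra.
have p0' : 0 < p by rewrite lt_neqAle eq_sym pp.
pose u := ln s - ln p.
have hs : s = p * expR u.
  by rewrite /u expRD expRN !lnK ?posrE // mulrCA divff ?mulr1 // gt_eqF.
have -> : p * (ln p - 1) - s * (ln s - 1) - ln s * (p - s) = p * (expR u - 1 - u).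
  have -> : ln s = ln p + u by rewrite /u; ring.
  by rewrite [in LHS]hs; ring.
split; first by rewrite mulr_ge0 //; have := expR_ge1Dx u; lra.
move=> /eqP; rewrite mulf_eq0 (negbTE pp) /= => /eqP h.
have [u0|u0] := eqVneq u 0; first by rewrite hs u0 expR0 mulr1.
by have := expR_gt1Dx u0; lra.
Qed.


Lemma sumE_ext Fn Fe Gn Ge : (forall i x, Fn i x = Gn i x) ->
  (forall e x y, Fe e x y = Ge e x y) -> sumE Fn Fe = sumE Gn Ge.
Proof.
move=> h1 h2; rewrite /sumE; congr (_ + _); apply: eq_bigr => i _;
  apply: eq_bigr => x _ //; apply: eq_bigr => y _ //.
Qed.

Lemma marg_ext (P Q : M) : (forall f x y, medge P f x y = medge Q f x y) ->
  (forall k x, mnode P k x = mnode Q k x) -> P = Q.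
Proof.
case: P => a b; case: Q => a' b' /= h1 h2.
have -> : a = a' by apply/funext => k; apply/funext => x.
have -> : b = b' by apply/funext => f; apply/funext => x; apply/funext => y.
by [].
Qed.

Definition orth (P Ps Q : M) :=
  sumE (fun i x => (mnode P i x - mnode Ps i x) * (ln (mnode Ps i x) - ln (mnode Q i x)))
       (fun e x y => (medge P e x y - medge Ps e x y) * (ln (medge Ps e x y) - ln (medge Q e x y))).

Lemma decomp (P Ps Q : M) : Bregman P Q = Bregman Ps Q + Bregman P Ps + orth P Ps Q.
Proof.
have H : Bregman P Q - Bregman Ps Q - Bregman P Ps = orth P Ps Q.
  rewrite !Bregman_sumE !sumEB /orth; apply: sumE_ext => *; rewrite /bb; ring.
by rewrite -H; ring.
Qed.

Lemma proj_char (X : M -> Prop) (Q Ps : M) :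
  pos_marg Ps -> X Ps ->
  (forall P, X P -> orth P Ps Q = 0) ->
  forall P, is_bregman_proj X Q P <->
  ((forall f x y, medge P f x y = medge Ps f x y) /\ (forall k x, mnode P k x = mnode Ps k x)).
Proof.
move=> [hpn hpe] XPs horth P.
have Bge0 : forall P', nonneg_marg P' -> 0 <= Bregman P' Ps.
  move=> P' [h1 h2]; rewrite Bregman_sumE; apply: sumE_ge0.
  + by move=> i x; case: (bb_ge0 _ _ (h1 i x) (hpn i x)).
  + by move=> e x y; case: (bb_ge0 _ _ (h2 e x y) (hpe e x y)).
split.
- move=> [hnn [XP hmin]].
  have hle := hmin Ps (conj (fun i x => ltW (hpn i x)) (fun e x y => ltW (hpe e x y))) XPs.
  have := decomp P Ps Q; rewrite horth // addr0 => hd.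
  have hB0 : Bregman P Ps = 0.
    by apply/eqP; rewrite eq_le Bge0 // andbT; move: hle; rewrite hd; lra.
  case: hnn => h1 h2.
  move: hB0; rewrite Bregman_sumE => /sumE_eq0 [].
  + by move=> i x; case: (bb_ge0 _ _ (h1 i x) (hpn i x)).
  + by move=> e x y; case: (bb_ge0 _ _ (h2 e x y) (hpe e x y)).
  move=> H1 H2; split.
  + by move=> f x y; case: (bb_ge0 _ _ (h2 f x y) (hpe f x y)) => _; apply; apply: H2.
  + by move=> k x; case: (bb_ge0 _ _ (h1 k x) (hpn k x)) => _; apply; apply: H1.
- move=> [h1 h2]; rewrite (marg_ext _ _ h1 h2); split.
    by split => *; apply: ltW.
  split => // P' hnn XP'.
  rewrite (decomp P' Ps Q) horth // addr0; have := Bge0 _ hnn; lra.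
Qed.

End Aux.

Section Cases.
Variables (R : realType) (n m d : nat).
Local Notation M := (marg R n m d).

Lemma sum_gt0 (F : 'I_d -> R) : (0 < d)%N -> (forall x, 0 < F x) -> 0 < \sum_x F x.
Proof.
move=> hd hF; rewrite (bigD1 (Ordinal hd)) //=.
have := hF (Ordinal hd); have : 0 <= \sum_(i < d | i != Ordinal hd) F i.
  by apply: sumr_ge0 => i _; apply: ltW.
lra.
Qed.

Lemma sqrt_mul_div (a b : R) : 0 < a -> 0 < b -> a * Num.sqrt (b / a) = Num.sqrt (a * b).
Proof.
move=> ha hb; rewrite -{1}(ger0_norm (ltW ha)) -sqrtr_sqr -sqrtrM ?sqr_ge0 //.
by congr Num.sqrt; field; rewrite gt_eqF.
Qed.

Lemma sqrt_swap (a b : R) : 0 < a -> 0 < b -> a * Num.sqrt (b / a) = b * Num.sqrt (a / b).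
Proof. by move=> ha hb; rewrite !sqrt_mul_div // mulrC. Qed.

Lemma sqrt_inv1 (a b : R) : 0 < a -> 0 < b -> Num.sqrt (a / b) * Num.sqrt (b / a) = 1.
Proof.
move=> ha hb; rewrite -sqrtrM ?divr_ge0 ?ltW //.
have -> : a / b * (b / a) = 1 by field; rewrite !gt_eqF.
exact: sqrtr1.
Qed.

Lemma lnMr (a b : R) : 0 < a -> 0 < b -> ln (a * b) - ln a = ln b.
Proof. by move=> ha hb; rewrite lnM ?posrE // addrC addKr. Qed.

Lemma ln_inv1 (a b : R) : 0 < a -> 0 < b -> a * b = 1 -> ln a = - ln b.
Proof.
move=> ha hb h; have := lnM (x:=a) (y:=b); rewrite !posrE h ln1 => /(_ ha hb) H.
by apply/eqP; rewrite -subr_eq0 opprK H.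
Qed.

End Cases.

Section CaseA.
Variables (R : realType) (n m d : nat).
Local Notation M := (marg R n m d).

Lemma case_a (G : M) (e : 'I_m) (v : 'I_n) : (0 < d)%N -> pos_marg G ->
  forall G' : M,
     is_bregman_proj (fun P : M => forall xi, rowsum P e xi = mnode P v xi) G G' <->
     ((forall f xi xj, medge G' f xi xj =
         if f == e then medge G e xi xj
                        * Num.sqrt (mnode G v xi / rowsum G e xi)
         else medge G f xi xj) /\
      (forall k x, mnode G' k x =
         if k == v then mnode G k x * Num.sqrt (rowsum G e x / mnode G k x)
         else mnode G k x)).
Proof.
move=> hd [gn ge].
have rp : forall x, 0 < rowsum G e x by move=> x; apply: sum_gt0.
pose Ps : M := Marg (fun k x => if k == v then mnode G k x * Num.sqrt (rowsum G e x / mnode G k x)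
         else mnode G k x) (fun f xi xj => if f == e then medge G e xi xj
                        * Num.sqrt (mnode G v xi / rowsum G e xi)
         else medge G f xi xj).
have tp : forall x, 0 < Num.sqrt (mnode G v x / rowsum G e x).
  by move=> x; rewrite sqrtr_gt0 divr_gt0.
have sp : forall x, 0 < Num.sqrt (rowsum G e x / mnode G v x).
  by move=> x; rewrite sqrtr_gt0 divr_gt0.
apply: (@proj_char _ _ _ _ _ G Ps).
- split => [k x|f x y] /=.
  + by case: eqP => [->|_]; [exact: mulr_gt0 (gn _ _) (sp _)|].
  + by case: eqP => [_|_]; [exact: mulr_gt0 (ge _ _ _) (tp _)|].
- move=> xi; rewrite /rowsum /= !eqxx -mulr_suml -/(rowsum G e xi).
  exact: sqrt_swap.
- move=> P XP; rewrite /orth (@sumE_single _ _ _ _ v e).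
  all: try by move=> k x /negbTE /= ->; rewrite subrr mulr0.
  all: try by move=> f x y /negbTE /= ->; rewrite subrr mulr0.
  rewrite /= !eqxx.
  have lst : forall x, ln (Num.sqrt (rowsum G e x / mnode G v x)) =
      - ln (Num.sqrt (mnode G v x / rowsum G e x)).
    by move=> x; apply: (@ln_inv1 _ _ _ (sp x) (tp x)); rewrite sqrt_inv1.
  under eq_bigr => x _ do rewrite lnMr // lst.
  rewrite -big_split /=; apply: big1 => x _.
  under eq_bigr => y _ do rewrite lnMr //.
  rewrite -mulr_suml sumrB -/(rowsum P e x).
  have -> : \sum_(i < d) medge G e x i * Num.sqrt (mnode G v x / rowsum G e x)
     = mnode G v x * Num.sqrt (rowsum G e x / mnode G v x).
    by rewrite -mulr_suml -/(rowsum G e x) sqrt_swap.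
  rewrite XP; ring.
Qed.

Lemma case_c (G : M) (e : 'I_m) (v : 'I_n) : (0 < d)%N -> pos_marg G ->
  forall G' : M,
     is_bregman_proj (fun P : M => forall xi, colsum P e xi = mnode P v xi) G G' <->
     ((forall f xi xj, medge G' f xi xj =
         if f == e then medge G e xi xj
                        * Num.sqrt (mnode G v xj / colsum G e xj)
         else medge G f xi xj) /\
      (forall k x, mnode G' k x =
         if k == v then mnode G k x * Num.sqrt (colsum G e x / mnode G k x)
         else mnode G k x)).
Proof.
move=> hd [gn ge].
have rp : forall x, 0 < colsum G e x by move=> x; apply: sum_gt0.
pose Ps : M := Marg (fun k x => if k == v then mnode G k x * Num.sqrt (colsum G e x / mnode G k x)
         else mnode G k x) (fun f xi xj => if f == e then medge G e xi xj
                        * Num.sqrt (mnode G v xj / colsum G e xj)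
         else medge G f xi xj).
have tp : forall x, 0 < Num.sqrt (mnode G v x / colsum G e x).
  by move=> x; rewrite sqrtr_gt0 divr_gt0.
have sp : forall x, 0 < Num.sqrt (colsum G e x / mnode G v x).
  by move=> x; rewrite sqrtr_gt0 divr_gt0.
apply: (@proj_char _ _ _ _ _ G Ps).
- split => [k x|f x y] /=.
  + by case: eqP => [->|_]; [exact: mulr_gt0 (gn _ _) (sp _)|].
  + by case: eqP => [_|_]; [exact: mulr_gt0 (ge _ _ _) (tp _)|].
- move=> xi; rewrite /colsum /= !eqxx -mulr_suml -/(colsum G e xi).
  exact: sqrt_swap.
- move=> P XP; rewrite /orth (@sumE_single _ _ _ _ v e).
  all: try by move=> k x /negbTE /= ->; rewrite subrr mulr0.
  all: try by move=> f x y /negbTE /= ->; rewrite subrr mulr0.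
  rewrite /= !eqxx.
  have lst : forall x, ln (Num.sqrt (colsum G e x / mnode G v x)) =
      - ln (Num.sqrt (mnode G v x / colsum G e x)).
    by move=> x; apply: (@ln_inv1 _ _ _ (sp x) (tp x)); rewrite sqrt_inv1.
  under eq_bigr => x _ do rewrite lnMr // lst.
  rewrite [X in _ + X]exchange_big /=.
  rewrite -big_split /=; apply: big1 => x _.
  under eq_bigr => y _ do rewrite lnMr //.
  rewrite -mulr_suml sumrB -/(colsum P e x).
  have -> : \sum_(i < d) medge G e i x * Num.sqrt (mnode G v x / colsum G e x)
     = mnode G v x * Num.sqrt (colsum G e x / mnode G v x).
    by rewrite -mulr_suml -/(colsum G e x) sqrt_swap.
  rewrite XP; ring.
Qed.

End CaseA.

Section CaseB.
Variables (R : realType) (n m d : nat).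
Local Notation M := (marg R n m d).

Lemma case_b (G : M) (e : 'I_m) (v : 'I_n) : (0 < d)%N -> pos_marg G ->
  forall G' : M,
     is_bregman_proj (fun P : M => nodesum P v = 1 /\ edgesum P e = 1) G G' <->
     ((forall f xi xj, medge G' f xi xj =
         if f == e then medge G e xi xj / edgesum G e else medge G f xi xj) /\
      (forall k x, mnode G' k x =
         if k == v then mnode G k x / nodesum G k else mnode G k x)).
Proof.
move=> hd [gn ge].
have np : 0 < nodesum G v by apply: sum_gt0.
have ep : 0 < edgesum G e by apply: sum_gt0 => // x; apply: sum_gt0.
pose Ps : M := Marg (fun k x => if k == v then mnode G k x / nodesum G k else mnode G k x)
   (fun f xi xj => if f == e then medge G e xi xj / edgesum G e else medge G f xi xj).
have hn : \sum_(x < d) mnode G v x / nodesum G v = 1.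
  by rewrite -mulr_suml -/(nodesum G v) divff // gt_eqF.
have he : \sum_(x < d) \sum_(y < d) medge G e x y / edgesum G e = 1.
  under eq_bigr => x _ do rewrite -mulr_suml.
  by rewrite -mulr_suml -/(edgesum G e) divff // gt_eqF.
apply: (@proj_char _ _ _ _ _ G Ps).
- split => [k x|f x y] /=.
  + by case: eqP => [->|_]; [exact: divr_gt0|].
  + by case: eqP => [_|_]; [exact: divr_gt0|].
- by rewrite /nodesum /edgesum /= !eqxx.
- move=> P [XP1 XP2]; rewrite /orth (@sumE_single _ _ _ _ v e).
  all: try by move=> k x /negbTE /= ->; rewrite subrr mulr0.
  all: try by move=> f x y /negbTE /= ->; rewrite subrr mulr0.
  rewrite /= !eqxx.
  under eq_bigr => x _ do rewrite lnMr ?invr_gt0 // lnV ?posrE //.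
  rewrite -mulr_suml sumrB -/(nodesum P v) XP1 hn subrr mul0r add0r.
  under eq_bigr => x _ do under eq_bigr => y _ do rewrite lnMr ?invr_gt0 // lnV ?posrE //.
  under eq_bigr => x _ do rewrite -mulr_suml sumrB.
  by rewrite -mulr_suml sumrB -/(edgesum P e) XP2 he subrr mul0r.
Qed.

End CaseB.

Theorem proposition1 (R : realType) (n m d : nat) (src dst : 'I_m -> 'I_n)
  (G : marg R n m d) (e : 'I_m) :
  (0 < d)%N -> pos_marg G ->
  (* (a) *)
  (forall G' : marg R n m d,
     is_bregman_proj (X_to_i src e) G G' <->
     ((forall f xi xj, medge G' f xi xj =
         if f == e then medge G e xi xj
                        * Num.sqrt (mnode G (src e) xi / rowsum G e xi)
         else medge G f xi xj) /\
      (forall k x, mnode G' k x =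
         if k == src e then mnode G k x * Num.sqrt (rowsum G e x / mnode G k x)
         else mnode G k x))) /\
  (* (b) *)
  (forall G' : marg R n m d,
     is_bregman_proj (X_norm_i src e) G G' <->
     ((forall f xi xj, medge G' f xi xj =
         if f == e then medge G e xi xj / edgesum G e else medge G f xi xj) /\
      (forall k x, mnode G' k x =
         if k == src e then mnode G k x / nodesum G k else mnode G k x))) /\
  (* (c) *)
  (forall G' : marg R n m d,
     is_bregman_proj (X_to_j dst e) G G' <->
     ((forall f xi xj, medge G' f xi xj =
         if f == e then medge G e xi xj
                        * Num.sqrt (mnode G (dst e) xj / colsum G e xj)
         else medge G f xi xj) /\
      (forall k x, mnode G' k x =
         if k == dst e then mnode G k x * Num.sqrt (colsum G e x / mnode G k x)
         else mnode G k x))) /\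
  (* (d) *)
  (forall G' : marg R n m d,
     is_bregman_proj (X_norm_j dst e) G G' <->
     ((forall f xi xj, medge G' f xi xj =
         if f == e then medge G e xi xj / edgesum G e else medge G f xi xj) /\
      (forall k x, mnode G' k x =
         if k == dst e then mnode G k x / nodesum G k else mnode G k x))).

Proof.
move=> hd hG; split; [|split; [|split]] => G'.
- exact: (@case_a _ _ _ _ G e (src e) hd hG G').
- exact: (@case_b _ _ _ _ G e (src e) hd hG G').
- exact: (@case_c _ _ _ _ G e (dst e) hd hG G').
- exact: (@case_b _ _ _ _ G e (dst e) hd hG G').
Qed.
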